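(* Let $\Gamma=G_5$ be the graph with two vertices $V_\alpha,V_\beta$ joined by exactly four edges (no loops), with degrees $d_\alpha,d_\beta\in\mathbb{Z}$. The family $\mathcal{F}(G_5,(d_\alpha,d_\beta))$ is jumping if and only if $0\le d_\alpha\le 2$ and $0\le d_\beta\le 2$.
   Context: Let $\Gamma$ be a connected graph (loops and multiple edges allowed) with vertices $V_1,\dots,V_n$ and integers $d_1,\dots,d_n$. A nodal curve with dual graph $\Gamma$ and rational components is a curve $C$ obtained from the disjoint union of copies $\mathbb{P}^1_{V_i}$ of $\mathbb{P}^1$ by choosing, for each edge of $\Gamma$, a point on each of its endpoint copies (all chosen points distinct) and identifying these two points to a node. A line bundle on $C$ is equivalent to line bundles on each $\mathbb{P}^1_{V_i}$ together with, at each node, an identification of the two fibres (descent data, a scalar in $\mathbb{C}^*$ after trivialising); global sections are tuples of sections on the $\mathbb{P}^1$'s compatible with these identifications. The family $\mathcal{F}(\Gamma,(d_i))$ consists of all pairs $(C,L)$ with $C$ such a curve (any choice of node positions) and $L$ a line bundle on $C$ whose pullback to $\mathbb{P}^1_{V_i}$ has degree $d_i$ for all $i$ (any descent data). $\Gamma$ with degrees $(d_i)$ is called jumping if $h^0(C,L)$ is not constant on $\mathcal{F}(\Gamma,(d_i))$, and non-jumping otherwise. *)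

(* Defs.v *)
From HB Require Import structures.
From mathcomp Require Import all_boot all_order all_algebra.
From mathcomp Require Import complex.
From mathcomp Require Import Rstruct.
Set Implicit Arguments. Unset Strict Implicit. Unset Printing Implicit Defensive.
Import Order.TTheory GRing.Theory Num.Theory.
Local Open Scope ring_scope.

Definition Cx : fieldType := (Rdefinitions.R)[i].

Section G5.
Variable F : fieldType.

(* A point of P^1 is given by homogeneous coordinates (x : y), a nonzero pair. *)
Definition hpt_nonzero (x : F * F) : bool := (x.1 != 0) || (x.2 != 0).
Definition hpt_distinct (x y : F * F) : bool := x.1 * y.2 != x.2 * y.1.

(* n edges: node positions p_i on P^1_alpha, q_i on P^1_beta, all distinct
   on each component. *)
Definition node_positions (n : nat) (p : 'I_n -> F * F) : Prop :=
  (forall i, hpt_nonzero (p i)) /\ (forall i j, i != j -> hpt_distinct (p i) (p j)).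

(* dimension of H^0(P^1, O(d)) : homogeneous polynomials of degree d in (x,y) *)
Definition nsec (d : int) : nat := if d < 0 then 0%N else (absz d).+1.

(* value at the (representative of the) point x of the k-th monomial
   x^k y^(d-k) of degree d; this trivialises the fibre of O(d) at x. *)
Definition monoval (d : int) (k : nat) (x : F * F) : F :=
  x.1 ^+ k * x.2 ^+ (absz d - k)%N.

(* Matrix of the gluing conditions: a pair (s, t) of sections of O(d1) on
   P^1_alpha and O(d2) on P^1_beta (row vector of coefficients) is a global
   section of L iff for every node i, s(p_i) = lam_i * t(q_i), where lam_i
   is the descent data (a nonzero scalar) at node i. *)
Definition glue_mx (n : nat) (d1 d2 : int) (p q : 'I_n -> F * F)
    (lam : 'I_n -> F) : 'M[F]_(nsec d1 + nsec d2, n) :=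
  col_mx (\matrix_(k < nsec d1, i < n) monoval d1 k (p i))
         (\matrix_(k < nsec d2, i < n) (- (lam i * monoval d2 k (q i)))).

Definition h0 (n : nat) (d1 d2 : int) (p q : 'I_n -> F * F) (lam : 'I_n -> F)
  : nat := \rank (kermx (glue_mx d1 d2 p q lam)).

(* an element (C, L) of the family F(Gamma, (d1, d2)) for the graph with two
   vertices joined by n edges (no loops) *)
Definition in_family (n : nat) (p q : 'I_n -> F * F) (lam : 'I_n -> F) : Prop :=
  node_positions p /\ node_positions q /\ (forall i, lam i != 0).

Definition jumping_two_vertex (n : nat) (d1 d2 : int) : Prop :=
  exists (p q p' q' : 'I_n -> F * F) (lam lam' : 'I_n -> F),
    in_family p q lam /\ in_family p' q' lam' /\
    h0 d1 d2 p q lam <> h0 d1 d2 p' q' lam'.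

End G5.

Definition jumping_G5 (da db : int) : Prop := @jumping_two_vertex Cx 4 da db.

(* Main.v *)
Require Import Defs.
From mathcomp Require Import all_boot all_order all_algebra.
From mathcomp Require Import ring zify.
Set Implicit Arguments. Unset Strict Implicit. Unset Printing Implicit Defensive.
Import Order.TTheory GRing.Theory Num.Theory.
Local Open Scope ring_scope.

Section General.
Variable F : fieldType.
Implicit Types (P Q : {poly F}) (x : F * F).

Definition hev (n : nat) P x := \sum_(k < n.+1) P`_k * (x.1 ^+ k * x.2 ^+ (n - k)).

Lemma hev_y n P x : x.2 != 0 -> (size P <= n.+1)%N -> hev n P x = x.2 ^+ n * P.[x.1 / x.2].
Proof.
move=> y0 sP; rewrite (horner_coef_wide _ sP) mulr_sumr /hev; apply: eq_bigr => k _.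
have kn : (k <= n)%N by rewrite -ltnS.
have -> : x.2 ^+ n = x.2 ^+ k * x.2 ^+ (n - k) by rewrite -exprD subnKC.
rewrite expr_div_n.
field; exact: expf_neq0.
Qed.

Lemma hev_y0 n P x : x.2 = 0 -> hev n P x = P`_n * x.1 ^+ n.
Proof.
move=> y0; rewrite /hev big_ord_recr /= subnn expr0 mulr1 big1 ?add0r // => k _.
by rewrite y0 expr0n subn_eq0 leqNgt ltn_ord /= !mulr0.
Qed.

Lemma coefM_top a b P Q : (size P <= a.+1)%N -> (size Q <= b.+1)%N ->
  (P * Q)`_(a + b) = P`_a * Q`_b.
Proof.
move=> sP sQ.
have sPQ := size_polyMleq P Q.
case: (ltnP (size P) a.+1) => [sPa|sPa].
  rewrite [P`_a]nth_default ?mul0r; last by [].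
  by rewrite nth_default //; apply: (leq_trans sPQ); lia.
case: (ltnP (size Q) b.+1) => [sQb|sQb].
  rewrite [Q`_b]nth_default ?mulr0; last by [].
  by rewrite nth_default //; apply: (leq_trans sPQ); lia.
have eP : size P = a.+1 by apply/eqP; rewrite eqn_leq sP sPa.
have eQ : size Q = b.+1 by apply/eqP; rewrite eqn_leq sQ sQb.
have P0 : P != 0 by rewrite -size_poly_eq0 eP.
have Q0 : Q != 0 by rewrite -size_poly_eq0 eQ.
have := lead_coefM P Q; rewrite !lead_coefE size_mul // eP eQ /=.
by rewrite addnS /=.
Qed.

Lemma hevM a b P Q x : (size P <= a.+1)%N -> (size Q <= b.+1)%N ->
  hev (a + b) (P * Q) x = hev a P x * hev b Q x.
Proof.
move=> sP sQ; have [y0|y0] := eqVneq x.2 0.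
  rewrite !hev_y0 // coefM_top // exprD; ring.
have sPQ : (size (P * Q)%R <= (a + b).+1)%N.
  by apply: (leq_trans (size_polyMleq P Q)); lia.
rewrite !hev_y // hornerM exprD; ring.
Qed.

Lemma hev_Xn n e x : (e <= n)%N -> hev n 'X^e x = x.1 ^+ e * x.2 ^+ (n - e).
Proof.
move=> en; rewrite /hev (bigD1 (Ordinal (en : (e < n.+1)%N))) //= coefXn eqxx mul1r.
rewrite big1 ?addr0 // => k kne; rewrite coefXn.
suff -> : (k == e :> nat) = false by rewrite mul0r.
by apply/negbTE; move: kne; apply: contra => /eqP ke; apply/eqP/val_inj.
Qed.

Definition lf (q : F * F) : {poly F} := Poly [:: - q.1; q.2].

Lemma size_lf q : (size (lf q) <= 2)%N.
Proof. exact: size_Poly. Qed.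

Lemma hev_lf q x : hev 1 (lf q) x = - q.1 * x.2 + q.2 * x.1.
Proof.
rewrite /hev !big_ord_recr big_ord0 /= /lf !coef_Poly /=.
rewrite ?subn0 ?subnn !expr0 !expr1; ring.
Qed.

Definition Emx n (p : 'I_4 -> F * F) : 'M[F]_(n.+1, 4) :=
  \matrix_(k < n.+1, i < 4) ((p i).1 ^+ k * (p i).2 ^+ (n - k)).

Lemma hev_mx n p (w : 'rV_(n.+1)) i :
  (w *m Emx n p) 0 i = hev n (\poly_(k < n.+1) w 0 (inord k)) (p i).
Proof.
rewrite !mxE /hev; apply: eq_bigr => k _; by rewrite coef_poly ltn_ord inord_val mxE.
Qed.


Lemma hev_zero n P (p : 'I_4 -> F * F) : (n <= 3)%N -> node_positions p ->
  (size P <= n.+1)%N -> (forall i, hev n P (p i) = 0) -> P = 0.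
Proof.
move=> n3 [nz ds] sP h0; apply/eqP; apply: contraT => P0.
have rootP i : (p i).2 != 0 -> root P ((p i).1 / (p i).2).
  move=> yi; move: (h0 i); rewrite hev_y // => /eqP.
  by rewrite mulf_eq0 expf_eq0 (negbTE yi) andbF.
have injP i k : (p i).2 != 0 -> (p k).2 != 0 ->
    (p i).1 / (p i).2 = (p k).1 / (p k).2 -> i = k.
  move=> yi yk /eqP; rewrite eqr_div // => /eqP e.
  apply/eqP; apply/negPn/negP => ik; move: (ds i k ik).
  by rewrite /hpt_distinct e mulrC eqxx.
case: (boolP [exists j, (p j).2 == 0]) => [/existsP [j /eqP yj]|/existsPn ally].
  have xj : (p j).1 != 0 by move: (nz j); rewrite /hpt_nonzero yj eqxx orbF.
  have Pn : P`_n = 0.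
    move: (h0 j); rewrite hev_y0 // => /eqP.
    by rewrite mulf_eq0 expf_eq0 (negbTE xj) andbF orbF => /eqP.
  have sPn : (size P <= n)%N.
    move: sP; rewrite leq_eqVlt => /orP[/eqP sPe|]; last by [].
    by move: P0; rewrite -lead_coef_eq0 lead_coefE sPe /= Pn eqxx.
  have yi i : i != j -> (p i).2 != 0.
    move=> ij; move: (ds i j ij); rewrite /hpt_distinct yj mulr0.
    by apply: contraNneq => ->; rewrite mul0r.
  set rs := [seq (p i).1 / (p i).2 | i <- enum (predC1 j)].
  have : (size rs < size P)%N.
    apply: max_poly_roots P0 _ _.
      apply/allP => z /mapP [i]; rewrite mem_enum /= => ij ->.
      exact: rootP (yi i ij).
    rewrite map_inj_in_uniq ?enum_uniq // => i k; rewrite !mem_enum /= => ij kj.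
    exact: injP (yi i ij) (yi k kj).
  rewrite size_map -cardE cardC1 card_ord /=.
  move=> H; have : (size P <= 3)%N by apply: (leq_trans sPn n3).
  by rewrite leqNgt H.
set rs := [seq (p i).1 / (p i).2 | i <- enum 'I_4].
have : (size rs < size P)%N.
  apply: max_poly_roots P0 _ _.
    by apply/allP => z /mapP [i] _ ->; apply: rootP (ally i).
  rewrite map_inj_in_uniq ?enum_uniq // => i k _ _.
  exact: injP (ally i) (ally k).
rewrite size_map size_enum_ord.
lia.
Qed.

Lemma Emx_free n p : (n <= 3)%N -> node_positions p -> row_free (Emx n p).
Proof.
move=> n3 np; rewrite -kermx_eq0; apply/rowV0Pn => [[v]].
rewrite sub_kermx => /eqP vE; apply/negP; rewrite negbK.
have P0 : \poly_(k < n.+1) v 0 (inord k) = 0.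
  apply: (hev_zero n3 np (size_poly _ _)) => i.
  by rewrite -hev_mx vE mxE.
apply/eqP/rowP => k; rewrite mxE.
have := coef_poly n.+1 (fun k => v 0 (inord k)) k.
by rewrite P0 coef0 ltn_ord inord_val => <-.
Qed.


Definition o0 : 'I_4 := @Ordinal 4 0 isT.
Definition o1 : 'I_4 := @Ordinal 4 1 isT.
Definition o2 : 'I_4 := @Ordinal 4 2 isT.
Definition o3 : 'I_4 := @Ordinal 4 3 isT.

Definition oth (j : 'I_4) : 'I_4 * 'I_4 * 'I_4 :=
  match val j with 0 => (o1, o2, o3) | 1 => (o0, o2, o3)
  | 2 => (o0, o1, o3) | _ => (o0, o1, o2) end.

Lemma oth_spec (j : 'I_4) : [/\ (oth j).1.1 != j, (oth j).1.2 != j, (oth j).2 != j &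
  forall i, i != j -> [|| i == (oth j).1.1, i == (oth j).1.2 | i == (oth j).2]].
Proof.
case: j => [[|[|[|[|//]]]] Hj]; split => //= -[[|[|[|[|//]]]] Hi] //.
Qed.

Definition fint m (p : 'I_4 -> F * F) (j : 'I_4) : {poly F} :=
  lf (p (oth j).1.1) * lf (p (oth j).1.2) * lf (p (oth j).2) *
  'X^(if (p j).2 == 0 then m else 0%N).

Lemma hev_fint m p j x : hev m.+3 (fint m p j) x =
  hev 1 (lf (p (oth j).1.1)) x * hev 1 (lf (p (oth j).1.2)) x *
  hev 1 (lf (p (oth j).2)) x *
  (x.1 ^+ (if (p j).2 == 0 then m else 0%N) *
   x.2 ^+ (m - (if (p j).2 == 0 then m else 0%N))).
Proof.
have e : (m.+3 = 1 + 1 + 1 + m)%N by [].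
rewrite e /fint hevM; last 2 first.
- apply: (leq_trans (size_polyMleq _ _)).
  have h1 := size_lf (p (oth j).2).
  have h2 : (size (lf (p (oth j).1.1) * lf (p (oth j).1.2))%R <= 3)%N.
    apply: (leq_trans (size_polyMleq _ _)).
    have := size_lf (p (oth j).1.1); have := size_lf (p (oth j).1.2); lia.
  lia.
- by rewrite size_polyXn; case: ifP.
rewrite hevM; last 2 first.
- apply: (leq_trans (size_polyMleq _ _)).
  have := size_lf (p (oth j).1.1); have := size_lf (p (oth j).1.2); lia.
- exact: size_lf.
rewrite hevM ?size_lf // hev_Xn //; by case: ifP.
Qed.

Lemma hev_lf_self q : hev 1 (lf q) q = 0.
Proof. by rewrite hev_lf; ring. Qed.

Lemma hev_lf_ne (p : 'I_4 -> F * F) a j : node_positions p -> a != j ->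
  hev 1 (lf (p a)) (p j) != 0.
Proof.
move=> [_ ds] aj; rewrite hev_lf; move: (ds a j aj); rewrite /hpt_distinct.
apply: contraNneq => e.
have : (p a).1 * (p j).2 - (p a).2 * (p j).1 =
  - (- (p a).1 * (p j).2 + (p a).2 * (p j).1) by ring.
by rewrite e oppr0 => /eqP; rewrite subr_eq0.
Qed.

Lemma Emx_full m p : node_positions p -> row_full (Emx m.+3 p).
Proof.
move=> np; have [nz ds] := np.
set c := fun j => hev m.+3 (fint m p j) (p j).
have c0 j : c j != 0.
  have [h1 h2 h3 _] := oth_spec j.
  rewrite /c hev_fint !mulf_neq0 ?hev_lf_ne //;
    case: ifP => [/eqP y0|/negbT y0]; rewrite ?subnn ?subn0 ?expr0 ?oner_eq0 //;
    apply: expf_neq0 => //.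
  by move: (nz j); rewrite /hpt_nonzero y0 eqxx orbF.
apply/row_fullP; exists (\matrix_(j < 4, k < m.+4) ((fint m p j)`_k / c j)).
apply/matrixP => j i; rewrite !mxE.
have -> : \sum_(k < m.+4) (\matrix_(j0, k0) ((fint m p j0)`_k0 / c j0)) j k * Emx m.+3 p k i
    = hev m.+3 (fint m p j) (p i) / c j.
  rewrite /hev mulr_suml; apply: eq_bigr => k _; rewrite !mxE; ring.
have [->|ij] := eqVneq i j; first by rewrite /= -/(c j) divff.
have [_ _ _ h] := oth_spec j.
rewrite hev_fint; case/or3P: (h i ij) => /eqP ->; rewrite hev_lf_self /=; ring.
Qed.

Lemma rank_Emx n p : node_positions p -> \rank (Emx n p) = minn n.+1 4.
Proof.
move=> np; case: (leqP n 3) => n3.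
  have := Emx_free n3 np; rewrite /row_free => /eqP ->; lia.
have [m ->] : exists m, n = m.+3 by exists (n - 3)%N; lia.
have := Emx_full m np; rewrite /row_full => /eqP ->; lia.
Qed.


Definition Emat (d : int) (p : 'I_4 -> F * F) : 'M[F]_(nsec d, 4) :=
  \matrix_(k < nsec d, i < 4) monoval d k (p i).

Lemma rank_Emat d p : node_positions p -> \rank (Emat d p) = minn (nsec d) 4.
Proof.
case: d => n np; first exact: (rank_Emx n np).
have := rank_leq_row (Emat (Negz n) p); change (nsec (Negz n)) with 0%N; lia.
Qed.

Lemma glue_eq d1 d2 p q (lam : 'I_4 -> F) : glue_mx d1 d2 p q lam =
  col_mx (Emat d1 p) (Emat d2 q *m diag_mx (\row_i (- lam i))).
Proof.
rewrite /glue_mx mul_mx_diag; congr col_mx; apply/matrixP => k i; rewrite !mxE.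
by rewrite mulrN mulrC.
Qed.

Lemma rank_lower d2 q (lam : 'I_4 -> F) : (forall i, lam i != 0) ->
  \rank (Emat d2 q *m diag_mx (\row_i (- lam i))) = \rank (Emat d2 q).
Proof.
move=> l0; apply: mxrankMfree; apply/row_freeP.
exists (diag_mx (\row_i (- lam i)^-1)); rewrite mulmx_diag.
apply/matrixP => i j; rewrite !mxE.
by rewrite mulfV ?oppr_eq0.
Qed.

Lemma rank_col_l m1 m2 (A : 'M[F]_(m1, 4)) (B : 'M[F]_(m2, 4)) :
  (\rank A <= \rank (col_mx A B))%N.
Proof. by apply: mxrankS; rewrite -addsmxE addsmxSl. Qed.

Lemma rank_col_r m1 m2 (A : 'M[F]_(m1, 4)) (B : 'M[F]_(m2, 4)) :
  (\rank B <= \rank (col_mx A B))%N.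
Proof. by apply: mxrankS; rewrite -addsmxE addsmxSr. Qed.

Lemma rank_col_l0 m1 m2 (A : 'M[F]_(m1, 4)) (B : 'M[F]_(m2, 4)) : m1 = 0%N ->
  \rank (col_mx A B) = \rank B.
Proof.
move=> m10; have : \rank A == 0%N by have := rank_leq_row A; move: m10 => /eqP; lia.
by rewrite mxrank_eq0 => /eqP ->; rewrite -addsmxE adds0mx.
Qed.

Lemma rank_col_r0 m1 m2 (A : 'M[F]_(m1, 4)) (B : 'M[F]_(m2, 4)) : m2 = 0%N ->
  \rank (col_mx A B) = \rank A.
Proof.
move=> m20; have : \rank B == 0%N by have := rank_leq_row B; move: m20 => /eqP; lia.
by rewrite mxrank_eq0 => /eqP ->; rewrite -addsmxE addsmx0.
Qed.

Lemma nsec3 d : (3 <= d)%R -> (4 <= nsec d)%N.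
Proof. case: d => n //= h; rewrite lez_nat in h; lia. Qed.

Lemma nsecN d : (d < 0)%R -> nsec d = 0%N.
Proof. by case: d. Qed.

Lemma rank_glue_nj d1 d2 p q (lam : 'I_4 -> F) : in_family p q lam ->
  [\/ (3 <= d1)%R, (3 <= d2)%R, (d1 < 0)%R | (d2 < 0)%R] ->
  \rank (glue_mx d1 d2 p q lam) = minn (nsec d1 + nsec d2) 4.
Proof.
move=> [np [nq l0]] H; rewrite glue_eq.
have r1 := rank_Emat d1 np; have r2 := rank_Emat d2 nq.
have r3 := rank_lower d2 q l0.
have c1 := rank_col_l (Emat d1 p) (Emat d2 q *m diag_mx (\row_i (- lam i))).
have c2 := rank_col_r (Emat d1 p) (Emat d2 q *m diag_mx (\row_i (- lam i))).
have c3 := rank_leq_col (col_mx (Emat d1 p) (Emat d2 q *m diag_mx (\row_i (- lam i)))).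
case: H => [/nsec3 h|/nsec3 h|/nsecN h|/nsecN h].
- lia.
- lia.
- rewrite rank_col_l0 // r3 r2 h; lia.
- rewrite rank_col_r0 // r1 h; lia.
Qed.

End General.
From mathcomp Require Import complex Rstruct.
Definition xv (i : 'I_4) : Cx := (i.+1)%:R.
Definition PP (i : 'I_4) : Cx * Cx := (xv i, 1).
Definition QQ (i : 'I_4) : Cx * Cx := (1, (xv i)^-1).

Lemma xv_neq0 i : xv i != 0.
Proof. by rewrite /xv (@pnatr_eq0 Cx). Qed.

Lemma xv_inj i j : xv i = xv j -> i = j.
Proof. by move=> /eqP; rewrite /xv (@eqr_nat Cx) eqSS => /eqP /val_inj. Qed.

Lemma np_PP : node_positions PP.
Proof.
split => [i|i j ij]; first by rewrite /hpt_nonzero /= oner_eq0 orbT.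
rewrite /hpt_distinct /= mulr1 mul1r; apply: contra ij => /eqP /xv_inj ->.
by [].
Qed.

Lemma np_QQ : node_positions QQ.
Proof.
split => [i|i j ij]; first by rewrite /hpt_nonzero /= oner_eq0.
rewrite /hpt_distinct /= mulr1 mul1r; apply: contra ij => /eqP /invr_inj /xv_inj ->.
by [].
Qed.

Lemma rank_upper a b :
  (\rank (glue_mx (Posz a) (Posz b) PP PP (fun _ => 1%R)) <= (maxn a b).+1)%N.
Proof.
set m := maxn a b.
have am : (a.+1 <= m.+1)%N by rewrite ltnS leq_maxl.
have bm : (b.+1 <= m.+1)%N by rewrite ltnS leq_maxr.
apply: (leq_trans _ (rank_leq_row (Emx m PP))); apply: mxrankS.
apply/row_subP => r; rewrite -(splitK r); case: (split r) => k /=; rewrite /glue_mx.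
  rewrite rowKu.
  have -> : row k (\matrix_(k0 < nsec a, i < 4) monoval a k0 (PP i))
      = row (widen_ord am k) (Emx m PP).
    by apply/rowP => i; rewrite !mxE /monoval /= !expr1n.
  exact: row_sub.
rewrite rowKd.
have -> : row k (\matrix_(k0 < nsec b, i < 4) - (1 * monoval b k0 (PP i)))
    = (-1) *: row (widen_ord bm k) (Emx m PP).
  by apply/rowP => i; rewrite !mxE /monoval /= !expr1n; ring.
by apply: scalemx_sub; exact: row_sub.
Qed.

Definition sgm (m : nat) (k : 'I_m.+2) : 'I_4 :=
  if (k <= m)%N then inord k else inord 3.
Arguments sgm : clear implicits.

Lemma sig_inj m : (m <= 2)%N -> injective (sgm m).
Proof.
move=> m2 k k'; rewrite /sgm.
have ik (j : 'I_m.+2) : (j <= m)%N -> ((@inord 3 j) : nat) = j.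
  by move=> jm; rewrite inordK //; lia.
have i3 : ((@inord 3 3) : nat) = 3%N by rewrite inordK.
case: ifP => h1; case: ifP => h2 => /(congr1 (@nat_of_ord 4)).
- by rewrite !ik // => /val_inj.
- by rewrite ik // i3 => e; move: h1; rewrite e; lia.
- by rewrite ik // i3 => e; move: h2; rewrite -e; lia.
- move=> _; apply: val_inj; move: h1 h2 (ltn_ord k) (ltn_ord k') => /negbT h1 /negbT h2.
  move=> l1 l2; change ((k : nat) = k'); lia.
Qed.

Lemma rank_sub_free m (pts : 'I_4 -> Cx * Cx) : (m <= 2)%N -> node_positions pts ->
  \rank (rowsub (sgm m) (Emx 3 pts)) = m.+2.
Proof.
move=> m2 np; rewrite rowsubE mxrankMfree ?Emx_free //.
apply/eqP; change (row_free (rowsub (sgm m) (1%:M : 'M[Cx]_4))).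
apply/row_freeP; exists (rowsub (sgm m) (1%:M : 'M[Cx]_4))^T.
apply/matrixP => k k'; rewrite !mxE.
rewrite (bigD1 (sgm m k)) //= big1 ?addr0.
  rewrite !mxE eqxx (inj_eq (sig_inj m2)) mul1r.
  by case: eqP => [->|/eqP]; rewrite ?eqxx // eq_sym => /negbTE ->.
by move=> j /negbTE hj; rewrite !mxE eq_sym hj mul0r.
Qed.

Lemma sub_colu m1 m2 (U : 'M[Cx]_(m1, 4)) (L : 'M[Cx]_(m2, 4)) (v : 'rV_4) i c :
  v = c *: row i U -> (v <= col_mx U L)%MS.
Proof.
move=> ->; apply: scalemx_sub; apply: submx_trans (row_sub i U) _.
by rewrite -addsmxE addsmxSl.
Qed.

Lemma sub_cold m1 m2 (U : 'M[Cx]_(m1, 4)) (L : 'M[Cx]_(m2, 4)) (v : 'rV_4) i c :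
  v = c *: row i L -> (v <= col_mx U L)%MS.
Proof.
move=> ->; apply: scalemx_sub; apply: submx_trans (row_sub i L) _.
by rewrite -addsmxE addsmxSr.
Qed.

Lemma lower_A a b : (b <= a)%N -> (a <= 2)%N ->
  (a.+2 <= \rank (glue_mx (Posz a) (Posz b) PP PP (fun i => xv i ^+ 3)))%N.
Proof.
move=> ba a2.
rewrite -(rank_sub_free a2 np_PP); apply: mxrankS.
apply/row_subP => k; rewrite row_rowsub /sgm /glue_mx.
case: ifP => ka.
  have ka' : (k < a.+1)%N by rewrite ltnS.
  apply: (@sub_colu _ _ _ _ _ (Ordinal ka') 1).
  apply/rowP => i; rewrite !mxE /monoval /= inordK ?expr1n ?mul1r //; lia.
have b0 : (0 < b.+1)%N by [].
apply: (@sub_cold _ _ _ _ _ (Ordinal b0) (-1)).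
apply/rowP => i; rewrite !mxE /monoval /= inordK // !expr1n; ring.
Qed.

Lemma lower_B a b : (a < b)%N -> (b <= 2)%N ->
  (b.+2 <= \rank (glue_mx (Posz a) (Posz b) PP PP (fun i => (xv i ^+ 3)^-1)))%N.
Proof.
move=> ab b2.
rewrite -(rank_sub_free b2 np_QQ); apply: mxrankS.
apply/row_subP => k; rewrite row_rowsub /sgm /glue_mx.
case: ifP => kb.
  have kb' : (k < b.+1)%N by rewrite ltnS.
  apply: (@sub_cold _ _ _ _ _ (Ordinal kb') (-1)).
  apply/rowP => i; rewrite !mxE /monoval /= inordK ?expr1n ?mul1r; last by lia.
  have x0 := xv_neq0 i.
  have e : xv i ^+ 3 = xv i ^+ (3 - k) * xv i ^+ k by rewrite -exprD subnK //; lia.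
  rewrite e exprVn; field; by rewrite ?expf_neq0.
have a0 : (0 < a.+1)%N by [].
apply: (@sub_colu _ _ _ _ _ (Ordinal a0) 1).
apply/rowP => i; rewrite !mxE /monoval /= inordK // !expr1n; ring.
Qed.

Theorem mainTheorem12 (da db : int) :
  jumping_G5 da db <-> ((0 <= da <= 2) /\ (0 <= db <= 2)).
Proof.
split.
  move=> [p [q [p' [q' [lam [lam' [f1 [f2 hne]]]]]]]].
  case: (boolP ((0 <= da <= 2) && (0 <= db <= 2))) => [/andP [] //|H].
  exfalso.
  have D : [\/ (3 <= da)%R, (3 <= db)%R, (da < 0)%R | (db < 0)%R].
    move: H; rewrite negb_and !negb_and -!ltNge.
    case/orP => /orP [h|h]; [constructor 3 | constructor 1 | constructor 4 | constructor 2];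
      move: h; lia.
  by apply: hne; rewrite /h0 !mxrank_ker !rank_glue_nj.
case=> /andP [ha1 ha2] /andP [hb1 hb2].
case: da ha1 ha2 => a // _ ha2; case: db hb1 hb2 => b // _ hb2.
have a2 : (a <= 2)%N by move: ha2; lia.
have b2 : (b <= 2)%N by move: hb2; lia.
have n1 : forall i : 'I_4, (1 : Cx) != 0 by move=> _; exact: oner_neq0.
case: (leqP b a) => ba.
  exists PP, PP, PP, PP, (fun _ => 1), (fun i => xv i ^+ 3).
  split; first by split; [exact: np_PP | split; [exact: np_PP | exact: n1]].
  split; first by split; [exact: np_PP | split; [exact: np_PP | move=> i; exact: expf_neq0 (xv_neq0 i)]].
  rewrite /h0 !mxrank_ker.
  have := rank_upper a b; have := lower_A ba a2.
  have := rank_leq_row (glue_mx (Posz a) (Posz b) PP PP (fun i => xv i ^+ 3)).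
  have -> : maxn a b = a by apply/maxn_idPl.
  lia.
exists PP, PP, PP, PP, (fun _ => 1), (fun i => (xv i ^+ 3)^-1).
split; first by split; [exact: np_PP | split; [exact: np_PP | exact: n1]].
split; first by split; [exact: np_PP | split; [exact: np_PP | move=> i; rewrite invr_eq0; exact: expf_neq0 (xv_neq0 i)]].
rewrite /h0 !mxrank_ker.
have := rank_upper a b; have := lower_B ba b2.
have := rank_leq_row (glue_mx (Posz a) (Posz b) PP PP (fun i => (xv i ^+ 3)^-1)).
have -> : maxn a b = b by apply/maxn_idPr; apply: ltnW.
lia.
Qed.
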